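(* Let $M>1$, $q>0$ and $n>-2$ be real parameters, and define the sets \[ \begin{aligned} A&=\{s\in\mathbb{R}: |s-(n-s)|\le q,\ 0\le s\le M,\ 0\le n-s\le M\},\\ B&=\{s\in\mathbb{R}: |s-(n+1-s)|\le q,\ 0\le s\le M,\ 0\le n+1-s\le M\},\\ C&=\{s\in\mathbb{R}: |s-(n-s)|\le q,\ 0\le s+1\le M,\ 0\le n+1-s\le M\}. \end{aligned} \] Then \[ \int_{A}\binom{M-1}{s}\binom{M-1}{n-s}ds\ \ge\ \int_{A}\binom{M}{s}\binom{M-2}{n-s}ds, \] \[ \int_{B}\binom{M-1}{s}\binom{M-1}{n-s}ds\ \le\ \int_{B}\binom{M}{s}\binom{M-2}{n-s}ds, \] \[ \int_{C}\binom{M-1}{s}\binom{M-1}{n-s}ds\ \ge\ \int_{C}\binom{M}{s+1}\binom{M-2}{n-s-1}ds. \]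
   Context: For real $a>-1$ and real $s$, the generalized binomial coefficient is $\binom{a}{s}=\Gamma(a+1)\cdot\frac{1}{\Gamma(s+1)}\cdot\frac{1}{\Gamma(a-s+1)}$, where $\Gamma$ is the Gamma function and $1/\Gamma$ is understood as the entire function (equal to $0$ at the poles of $\Gamma$, i.e. at non-positive integers). *)

(* Defs.v *)
From Stdlib Require Import Reals Lra Arith Factorial ClassicalEpsilon.
Open Scope R_scope.

Fixpoint poch (x : R) (k : nat) : R :=
  match k with
  | O => 1
  | S k' => poch x k' * (x + INR k')
  end.

(* Gauss/Euler limit: 1/Gamma(x) = lim_{n->oo} x(x+1)...(x+n) / (n! n^x),
   valid for every real x (the entire function 1/Gamma, 0 at x = 0,-1,-2,...).
   Here n = k+1. *)
Definition rgamma_seq (x : R) (k : nat) : R :=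
  poch x (S (S k)) / (INR (fact (S k)) * Rpower (INR (S k)) x).

Definition rgamma (x : R) : R :=
  epsilon (inhabits 0) (fun l => Un_cv (rgamma_seq x) l).

(* Gamma(a+1) = 1 / rgamma(a+1) for a > -1. *)
Definition binom (a s : R) : R :=
  / rgamma (a + 1) * rgamma (s + 1) * rgamma (a - s + 1).

Definition indic (P : R -> Prop) (s : R) : R :=
  if excluded_middle_informative (P s) then 1 else 0.

Definition setA (M q n : R) (s : R) : Prop :=
  Rabs (s - (n - s)) <= q /\ 0 <= s <= M /\ 0 <= n - s <= M.
Definition setB (M q n : R) (s : R) : Prop :=
  Rabs (s - (n + 1 - s)) <= q /\ 0 <= s <= M /\ 0 <= n + 1 - s <= M.
Definition setC (M q n : R) (s : R) : Prop :=
  Rabs (s - (n - s)) <= q /\ 0 <= s + 1 <= M /\ 0 <= n + 1 - s <= M.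

(* Main.v *)
Require Import Defs.
From Stdlib Require Import Reals Lra Lia Psatz Arith Factorial ClassicalEpsilon.
Open Scope R_scope.

Lemma poch_S_shift : forall m x, poch x (S m) = x * poch (x+1) m.
Proof.
  induction m as [|m IH]; intros x.
  - cbn [poch]. simpl INR. ring.
  - change (poch x (S (S m))) with (poch x (S m) * (x + INR (S m))).
    rewrite IH. change (poch (x+1) (S m)) with (poch (x+1) m * (x + 1 + INR m)).
    rewrite S_INR. ring.
Qed.

Lemma poch_nonneg : forall m x, 0 <= x -> 0 <= poch x m.
Proof.
  induction m as [|m IH]; intros x Hx; cbn [poch]; [lra|].
  apply Rmult_le_pos; [auto|]. pose proof (pos_INR m); lra.
Qed.

Lemma poch_pos : forall m x, 0 < x -> 0 < poch x m.
Proof.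
  induction m as [|m IH]; intros x Hx; cbn [poch]; [lra|].
  apply Rmult_lt_0_compat; [auto|]. pose proof (pos_INR m); lra.
Qed.

Lemma Rpower_pos : forall a b, 0 < Rpower a b.
Proof. intros; unfold Rpower; apply exp_pos. Qed.

Lemma INR_S_pos : forall k, 0 < INR (S k).
Proof. intros; apply lt_0_INR; lia. Qed.

Lemma INR_fact_pos : forall k, 0 < INR (fact k).
Proof. intros; apply lt_0_INR; apply lt_O_fact. Qed.

Definition u (k : nat) (t : R) : R :=
  poch (t+1) (S k) / (INR (fact (S k)) * Rpower (INR (S k)) t).

Lemma a_eq_u : forall k t, rgamma_seq t k = t * u k t.
Proof.
  intros. unfold rgamma_seq, u. rewrite (poch_S_shift (S k)).
  pose proof (INR_fact_pos (S k)). pose proof (Rpower_pos (INR (S k)) t).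
  field. split; lra.
Qed.

Lemma a_eq_u1 : forall k t, rgamma_seq (t+1) k = u k t * (t + 1 + INR (S k)) / INR (S k).
Proof.
  intros. unfold rgamma_seq, u.
  change (poch (t+1) (S (S k))) with (poch (t+1) (S k) * (t + 1 + INR (S k))).
  rewrite Rpower_plus, Rpower_1 by apply INR_S_pos.
  pose proof (INR_fact_pos (S k)). pose proof (Rpower_pos (INR (S k)) t).
  pose proof (INR_S_pos k).
  field. repeat split; lra.
Qed.

Lemma ln_le_sub1 : forall y, 0 < y -> ln y <= y - 1.
Proof. intros y Hy. pose proof (exp_ineq1_le (ln y)). rewrite exp_ln in H by lra. lra. Qed.

Lemma ln_div' : forall x y, 0 < x -> 0 < y -> ln (x / y) = ln x - ln y.
Proof. intros. unfold Rdiv. rewrite ln_mult, ln_Rinv; try lra. apply Rinv_0_lt_compat; lra. Qed.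

Lemma exp_le' : forall a b, a <= b -> exp a <= exp b.
Proof. intros a b [H|H]; [left; apply exp_increasing; auto| subst; lra]. Qed.

Lemma u_pos : forall k t, 0 <= t -> 0 < u k t.
Proof.
  intros. unfold u. apply Rdiv_lt_0_compat.
  - apply poch_pos; lra.
  - apply Rmult_lt_0_compat; [apply INR_fact_pos|apply Rpower_pos].
Qed.

Lemma u_ratio : forall k t, 0 <= t <= 1 ->
  u (S k) t <= u k t /\ u k t * (1 - 2 / (INR (S k) * INR (S (S k)))) <= u (S k) t.
Proof.
  intros k t Ht.
  set (N := INR (S k)).
  assert (HN : 1 <= N) by (unfold N; rewrite S_INR; pose proof (pos_INR k); lra).
  assert (HN1 : INR (S (S k)) = N + 1) by (unfold N; rewrite (S_INR (S k)); ring).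
  set (L := ln (N+1) - ln N).
  assert (HL1 : 1 / (N+1) <= L).
  { unfold L. pose proof (ln_le_sub1 (N / (N+1)) ltac:(apply Rdiv_lt_0_compat; lra)).
    rewrite ln_div' in H by lra.
    assert (N / (N+1) - 1 = - (1 / (N+1))) by (field; lra). lra. }
  assert (HL2 : L <= 1 / N).
  { unfold L. pose proof (ln_le_sub1 ((N+1) / N) ltac:(apply Rdiv_lt_0_compat; lra)).
    rewrite ln_div' in H by lra.
    assert ((N+1) / N - 1 = 1 / N) by (field; lra). lra. }
  set (E := exp (- (t * L))).
  assert (HE : u (S k) t = u k t * ((1 + t / (N+1)) * E)).
  { unfold u, E. change (poch (t+1) (S (S k))) with (poch (t+1) (S k) * (t + 1 + INR (S k))).
    change (fact (S (S k))) with ((S (S k)) * fact (S k))%nat.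
    rewrite mult_INR. rewrite HN1. fold N.
    unfold Rpower. unfold L.
    replace (- (t * (ln (N + 1) - ln N))) with (t * ln N + - (t * ln (N+1))) by ring.
    rewrite exp_plus, exp_Ropp.
    pose proof (INR_fact_pos (S k)). pose proof (exp_pos (t * ln N)).
    pose proof (exp_pos (t * ln (N+1))).
    field. repeat split; lra. }
  assert (HE1 : E <= / (1 + t / (N+1))).
  { unfold E. apply Rle_trans with (exp (- (t / (N+1)))).
    - apply exp_le'.
      assert (t / (N+1) <= t * L).
      { unfold Rdiv. replace (t * / (N+1)) with (t * (1/(N+1))) by (field; lra).
        apply Rmult_le_compat_l; lra. }
      lra.
    - rewrite exp_Ropp. apply Rinv_le_contravar.
      + assert (0 <= t / (N+1)) by (unfold Rdiv; apply Rmult_le_pos; [lra|left; apply Rinv_0_lt_compat; lra]). lra.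
      + apply exp_ineq1_le. }
  assert (HE2 : 1 - t / N <= E).
  { unfold E. pose proof (exp_ineq1_le (- (t * L))).
    assert (t * L <= t / N).
    { unfold Rdiv. replace (t * / N) with (t * (1/N)) by (field; lra).
      apply Rmult_le_compat_l; lra. }
    lra. }
  set (c := 1 + t / (N+1)) in *.
  assert (Hc : 1 <= c).
  { unfold c. assert (0 <= t / (N+1)) by (unfold Rdiv; apply Rmult_le_pos; [lra|left; apply Rinv_0_lt_compat; lra]). lra. }
  assert (Hup : c * E <= 1).
  { apply Rle_trans with (c * / c). apply Rmult_le_compat_l; lra. right; field; lra. }
  assert (Hlo : 1 - 2 / (N * (N+1)) <= c * E).
  { apply Rle_trans with (c * (1 - t / N)).
    - replace (c * (1 - t/N)) with (1 - (t + t*t) / (N * (N+1))) by (unfold c; field; lra).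
      assert ((t + t*t) / (N * (N+1)) <= 2 / (N * (N+1))).
      { unfold Rdiv. apply Rmult_le_compat_r. left; apply Rinv_0_lt_compat; nra. nra. }
      lra.
    - apply Rmult_le_compat_l; lra. }
  pose proof (u_pos k t ltac:(lra)).
  rewrite HN1, HE. split.
  - replace (u k t) with (u k t * 1) at 2 by ring. apply Rmult_le_compat_l; lra.
  - apply Rmult_le_compat_l; lra.
Qed.

Lemma tel : forall k t, 0 <= t <= 1 -> forall p,
  u (k + p) t <= u k t /\
  u k t * (1 - 2 / INR (S k) + 2 / INR (S (k + p))) <= u (k + p) t.
Proof.
  intros k t Ht p. induction p as [|p [IH1 IH2]].
  - rewrite Nat.add_0_r. split; [lra|]. right; ring.
  - rewrite Nat.add_succ_r. destruct (u_ratio (k + p) t Ht) as [R1 R2].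
    pose proof (u_pos (k+p) t ltac:(lra)).
    pose proof (u_pos k t ltac:(lra)).
    set (N := INR (S (k+p))) in *.
    assert (HN : 1 <= N) by (unfold N; rewrite S_INR; pose proof (pos_INR (k+p)); lra).
    assert (HN1 : INR (S (S (k+p))) = N + 1) by (unfold N; rewrite (S_INR (S (k+p))); ring).
    rewrite HN1 in *. split; [lra|].
    assert (Hid : 2 / N - 2 / (N * (N+1)) = 2 / (N+1)) by (field; lra).
    assert (Heps : 0 <= 2 / (N * (N+1))) by (unfold Rdiv; apply Rmult_le_pos; [lra|left; apply Rinv_0_lt_compat; nra]).
    assert (u (k+p) t * (2 / (N * (N+1))) <= u k t * (2 / (N * (N+1)))) by (apply Rmult_le_compat_r; lra).
    nra.
Qed.

Lemma u0_eq : forall t, u 0 t = t + 1.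
Proof.
  intros. unfold u. cbn [poch]. simpl fact. simpl INR. unfold Rpower. rewrite ln_1, Rmult_0_r, exp_0.
  field.
Qed.

Lemma u_le2 : forall k t, 0 <= t <= 1 -> u k t <= 2.
Proof.
  intros. destruct (tel 0 t H k) as [H1 _]. simpl in H1. rewrite u0_eq in H1. lra.
Qed.

Lemma u_diff : forall k t p, 0 <= t <= 1 ->
  0 <= u k t - u (k+p) t <= 4 / INR (S k).
Proof.
  intros k t p Ht. destruct (tel k t Ht p) as [H1 H2].
  pose proof (u_le2 k t Ht). pose proof (u_pos k t ltac:(lra)).
  pose proof (INR_S_pos k). pose proof (INR_S_pos (k+p)).
  assert (0 <= 2 / INR (S (k+p))) by (unfold Rdiv; apply Rmult_le_pos; [lra|left; apply Rinv_0_lt_compat; lra]).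
  assert (u k t * (2 / INR (S (k+p))) >= 0) by nra.
  assert (u k t * (2 / INR (S k)) <= 4 / INR (S k)).
  { replace (4 / INR (S k)) with (2 * (2 / INR (S k))) by (field; lra).
    apply Rmult_le_compat_r; [|lra]. unfold Rdiv; apply Rmult_le_pos; [lra|left; apply Rinv_0_lt_compat; lra]. }
  split; nra.
Qed.

Lemma cb : forall x k p, 0 <= x <= 2 ->
  Rabs (rgamma_seq x k - rgamma_seq x (k+p)) <= 8 / INR (S k).
Proof.
  intros x k p Hx. pose proof (INR_S_pos k). pose proof (INR_S_pos (k+p)).
  assert (HNle : INR (S k) <= INR (S (k+p))) by (apply le_INR; lia).
  destruct (Rle_dec x 1) as [H1|H1].
  - rewrite !a_eq_u. destruct (u_diff k x p ltac:(lra)).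
    rewrite <- Rmult_minus_distr_l. rewrite Rabs_mult, Rabs_pos_eq by lra.
    rewrite Rabs_pos_eq by lra.
    apply Rle_trans with (1 * (4 / INR (S k))).
    + apply Rmult_le_compat; lra.
    + assert (0 < 4 / INR (S k)) by (apply Rdiv_lt_0_compat; lra).
      assert (4 / INR (S k) <= 8 / INR (S k)) by (unfold Rdiv; apply Rmult_le_compat_r; [left; apply Rinv_0_lt_compat|]; lra).
      lra.
  - replace x with ((x - 1) + 1) by ring. set (t := x - 1).
    assert (Ht : 0 <= t <= 1) by (unfold t; lra).
    rewrite !a_eq_u1. destruct (u_diff k t p Ht).
    pose proof (u_pos k t ltac:(lra)). pose proof (u_pos (k+p) t ltac:(lra)).
    pose proof (u_le2 k t Ht). pose proof (u_le2 (k+p) t Ht).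
    set (N1 := INR (S k)) in *. set (N2 := INR (S (k+p))) in *.
    replace (u k t * (t + 1 + N1) / N1 - u (k + p) t * (t + 1 + N2) / N2)
      with ((u k t - u (k+p) t) + (u k t * (t+1) / N1) - (u (k+p) t * (t+1) / N2)) by (field; lra).
    assert (0 <= u k t * (t+1) / N1 <= 4 / N1).
    { split. unfold Rdiv. apply Rmult_le_pos; [nra| left; apply Rinv_0_lt_compat; lra].
      unfold Rdiv. apply Rmult_le_compat_r; [left; apply Rinv_0_lt_compat; lra| nra]. }
    assert (0 <= u (k+p) t * (t+1) / N2 <= 4 / N1).
    { split. unfold Rdiv. apply Rmult_le_pos; [nra| left; apply Rinv_0_lt_compat; lra].
      apply Rle_trans with (4 / N2).
      unfold Rdiv. apply Rmult_le_compat_r; [left; apply Rinv_0_lt_compat; lra| nra].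
      unfold Rdiv. apply Rmult_le_compat_l; [lra|]. apply Rinv_le_contravar; lra. }
    replace (8 / N1) with (4 / N1 + 4 / N1) by (field; lra).
    apply Rabs_le. lra.
Qed.

Lemma lim_le : forall (v : nat -> R) l c K, Un_cv v l ->
  (forall n, (K <= n)%nat -> v n <= c) -> l <= c.
Proof.
  intros v l c K Hv Hb. destruct (Rle_dec l c) as [|Hn]; [auto|].
  exfalso. destruct (Hv (l - c) ltac:(lra)) as [N HN].
  specialize (HN (Nat.max N K) ltac:(lia)). specialize (Hb (Nat.max N K) ltac:(lia)).
  unfold R_dist in HN. apply Rabs_def2 in HN. lra.
Qed.

Lemma lim_ge : forall (v : nat -> R) l c K, Un_cv v l ->
  (forall n, (K <= n)%nat -> c <= v n) -> c <= l.
Proof.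
  intros v l c K Hv Hb. destruct (Rle_dec c l) as [|Hn]; [auto|].
  exfalso. destruct (Hv (c - l) ltac:(lra)) as [N HN].
  specialize (HN (Nat.max N K) ltac:(lia)). specialize (Hb (Nat.max N K) ltac:(lia)).
  unfold R_dist in HN. apply Rabs_def2 in HN. lra.
Qed.

Lemma cv_ev : forall (v w : nat -> R) l K, Un_cv v l ->
  (forall n, (K <= n)%nat -> w n = v n) -> Un_cv w l.
Proof.
  intros v w l K Hv He eps Heps. destruct (Hv eps Heps) as [N HN].
  exists (Nat.max N K). intros n Hn. rewrite He by lia. apply HN; lia.
Qed.

Lemma cv_const : forall c, Un_cv (fun _ => c) c.
Proof. intros c eps Heps. exists 0%nat. intros. unfold R_dist. rewrite Rminus_diag, Rabs_R0. lra. Qed.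

Lemma cv_ratio : forall c d, Un_cv (fun k => (INR k + c) / (INR k + d)) 1.
Proof.
  intros c d eps Heps.
  destruct (INR_unbounded (Rabs d + Rabs (c - d) / eps + 1)) as [N HN].
  exists N. intros n Hn. apply le_INR in Hn.
  pose proof (Rabs_pos (c - d)).
  assert (Hq : 0 <= Rabs (c - d) / eps) by (unfold Rdiv; apply Rmult_le_pos; [lra|left; apply Rinv_0_lt_compat; lra]).
  pose proof (Rle_abs (-d)). rewrite Rabs_Ropp in H0.
  set (D := INR n + d).
  assert (HD : Rabs (c - d) / eps < D) by (unfold D; lra).
  assert (HD0 : 0 < D) by lra.
  unfold R_dist. replace ((INR n + c) / D - 1) with ((c - d) / D) by (unfold D; field; lra).
  unfold Rdiv. rewrite Rabs_mult, Rabs_inv, (Rabs_pos_eq D) by lra.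
  assert (Rabs (c - d) < eps * D).
  { apply Rmult_lt_compat_l with (r := eps) in HD; [|lra].
    replace (eps * (Rabs (c - d) / eps)) with (Rabs (c-d)) in HD by (field; lra). lra. }
  apply Rmult_lt_reg_r with D; [lra|]. rewrite Rmult_assoc, Rinv_l by lra. lra.
Qed.

Lemma exists_base : forall x, 0 <= x <= 2 -> exists l, Un_cv (rgamma_seq x) l.
Proof.
  intros x Hx.
  assert (Cauchy_crit (rgamma_seq x)).
  { intros eps Heps.
    destruct (INR_unbounded (16 / eps)) as [N HN].
    exists N. intros n m Hn Hm. unfold R_dist.
    pose proof (cb x N (n - N) Hx). pose proof (cb x N (m - N) Hx).
    replace (N + (n - N))%nat with n in H by lia.
    replace (N + (m - N))%nat with m in H0 by lia.
    pose proof (INR_S_pos N).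
    assert (16 / INR (S N) < eps).
    { rewrite S_INR. pose proof (pos_INR N). apply Rmult_lt_reg_r with (INR N + 1); [lra|].
      unfold Rdiv. rewrite Rmult_assoc, Rinv_l by lra.
      apply Rmult_lt_compat_l with (r := eps) in HN; [|lra].
      replace (eps * (16 / eps)) with 16 in HN by (field; lra). nra. }
    replace (rgamma_seq x n - rgamma_seq x m) with
      (- (rgamma_seq x N - rgamma_seq x n) + (rgamma_seq x N - rgamma_seq x m)) by ring.
    eapply Rle_lt_trans. apply Rabs_triang. rewrite Rabs_Ropp.
    replace (16 / INR (S N)) with (8 / INR (S N) + 8 / INR (S N)) in H2 by (field; lra).
    lra. }
  destruct (Rcomplete.R_complete _ H) as [l Hl]. eauto.
Qed.

Lemma a_shift : forall k x,
  rgamma_seq x k * (INR k + (x + 2)) = x * rgamma_seq (x+1) k * (INR k + 1).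
Proof.
  intros. unfold rgamma_seq. rewrite (poch_S_shift (S k) x).
  change (poch (x+1) (S (S k))) with (poch (x+1) (S k) * (x + 1 + INR (S k))).
  rewrite Rpower_plus, Rpower_1 by apply INR_S_pos.
  pose proof (INR_fact_pos (S k)). pose proof (Rpower_pos (INR (S k)) x).
  pose proof (INR_S_pos k). rewrite S_INR in *.
  field. repeat split; lra.
Qed.

Lemma cv_ext : forall (v w : nat -> R) l, Un_cv v l -> (forall n, w n = v n) -> Un_cv w l.
Proof. intros. apply cv_ev with v 0%nat; auto. Qed.

Lemma ex_up : forall x, x <> 0 -> (exists l, Un_cv (rgamma_seq x) l) ->
  exists l, Un_cv (rgamma_seq (x+1)) l.
Proof.
  intros x Hx [l Hl]. exists (l * 1 * / x).
  apply cv_ext with (fun k => rgamma_seq x k * ((INR k + (x+2)) / (INR k + 1)) * / x).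
  - apply CV_mult; [apply CV_mult; [exact Hl| apply cv_ratio]| apply cv_const].
  - intros k. pose proof (a_shift k x). pose proof (pos_INR k).
    replace (rgamma_seq x k * ((INR k + (x + 2)) / (INR k + 1)) * / x) with
      (rgamma_seq x k * (INR k + (x + 2)) / ((INR k + 1) * x)) by (field; lra).
    rewrite H. field; lra.
Qed.

Lemma ex_down : forall x, (exists l, Un_cv (rgamma_seq (x+1)) l) ->
  exists l, Un_cv (rgamma_seq x) l.
Proof.
  intros x [l Hl]. exists (x * l * 1).
  destruct (INR_unbounded (Rabs x + 2)) as [K HK].
  apply cv_ev with (fun k => x * rgamma_seq (x+1) k * ((INR k + 1) / (INR k + (x+2)))) K.
  - apply CV_mult; [apply CV_mult; [apply cv_const| exact Hl]| apply cv_ratio].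
  - intros k Hk. apply le_INR in Hk. pose proof (Rle_abs (-x)). rewrite Rabs_Ropp in H.
    pose proof (a_shift k x).
    replace (x * rgamma_seq (x + 1) k * ((INR k + 1) / (INR k + (x + 2)))) with
      (x * rgamma_seq (x + 1) k * (INR k + 1) / (INR k + (x + 2))) by (field; lra).
    rewrite <- H0. field; lra.
Qed.

Lemma ex_all_aux : forall m x, - INR m <= x <= INR m + 2 ->
  exists l, Un_cv (rgamma_seq x) l.
Proof.
  induction m as [|m IH]; intros x Hx.
  - simpl INR in Hx. apply exists_base. lra.
  - rewrite S_INR in Hx. pose proof (pos_INR m).
    destruct (Rle_dec x (INR m + 2)) as [H1|H1].
    + destruct (Rle_dec (- INR m) x) as [H2|H2].
      * apply IH; lra.
      * apply ex_down. apply IH; lra.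
    + replace x with ((x - 1) + 1) by ring. apply ex_up; [lra|]. apply IH; lra.
Qed.

Lemma ex_all : forall x, exists l, Un_cv (rgamma_seq x) l.
Proof.
  intros x. destruct (INR_unbounded (Rabs x)) as [m Hm].
  apply (ex_all_aux m). pose proof (Rle_abs x). pose proof (Rle_abs (-x)).
  rewrite Rabs_Ropp in H0. lra.
Qed.

Lemma G_cv : forall x, Un_cv (rgamma_seq x) (rgamma x).
Proof.
  intros x. unfold rgamma. apply (epsilon_spec (inhabits 0) (fun l => Un_cv (rgamma_seq x) l)).
  apply ex_all.
Qed.

Lemma G_FE : forall x, rgamma x = x * rgamma (x+1).
Proof.
  intros x.
  assert (H1 : Un_cv (fun k => rgamma_seq x k * ((INR k + (x+2)) / (INR k + 1))) (rgamma x * 1)).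
  { apply CV_mult; [apply G_cv| apply cv_ratio]. }
  assert (H2 : Un_cv (fun k => rgamma_seq x k * ((INR k + (x+2)) / (INR k + 1))) (x * rgamma (x+1))).
  { apply cv_ext with (fun k => x * rgamma_seq (x+1) k).
    - apply CV_mult; [apply cv_const| apply G_cv].
    - intros k. pose proof (pos_INR k). pose proof (a_shift k x).
      replace (rgamma_seq x k * ((INR k + (x + 2)) / (INR k + 1))) with
        (rgamma_seq x k * (INR k + (x + 2)) / (INR k + 1)) by (field; lra).
      rewrite H0. field; lra. }
  pose proof (UL_sequence _ _ _ H1 H2). lra.
Qed.

Lemma G_FE' : forall z w, w = z + 1 -> rgamma z = z * rgamma w.
Proof. intros z w ->. apply G_FE. Qed.

Lemma G_nonneg : forall x, 0 <= x -> 0 <= rgamma x.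
Proof.
  intros x Hx. apply (lim_ge (rgamma_seq x) _ 0 0 (G_cv x)).
  intros n _. unfold rgamma_seq. apply Rmult_le_pos.
  - apply poch_nonneg; lra.
  - left. apply Rinv_0_lt_compat. apply Rmult_lt_0_compat; [apply INR_fact_pos|apply Rpower_pos].
Qed.

Lemma G_pos_base : forall x, 0 < x <= 2 -> 0 < rgamma x.
Proof.
  intros x Hx. destruct (Rle_dec x 1) as [H1|H1].
  - pose proof (u_pos 2 x ltac:(lra)).
    apply Rlt_le_trans with (x * (u 2 x / 3)); [apply Rmult_lt_0_compat; lra|].
    apply (lim_ge _ _ _ 2 (G_cv x)). intros n Hn.
    rewrite a_eq_u. apply Rmult_le_compat_l; [lra|].
    destruct (tel 2 x ltac:(lra) (n - 2)) as [_ H2].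
    replace (2 + (n - 2))%nat with n in H2 by lia.
    pose proof (INR_S_pos n). 
    assert (0 <= 2 / INR (S n)) by (unfold Rdiv; apply Rmult_le_pos; [lra|left; apply Rinv_0_lt_compat; lra]).
    replace (INR 3) with 3 in H2 by (simpl; ring). nra.
  - set (t := x - 1). assert (Ht : 0 <= t <= 1) by (unfold t; lra).
    replace x with (t + 1) by (unfold t; ring).
    pose proof (u_pos 2 t ltac:(lra)).
    apply Rlt_le_trans with (u 2 t / 3); [lra|].
    apply (lim_ge _ _ _ 2 (G_cv (t+1))). intros n Hn.
    rewrite a_eq_u1.
    destruct (tel 2 t Ht (n - 2)) as [_ H2].
    replace (2 + (n - 2))%nat with n in H2 by lia.
    pose proof (INR_S_pos n). pose proof (u_pos n t ltac:(lra)).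
    assert (0 <= 2 / INR (S n)) by (unfold Rdiv; apply Rmult_le_pos; [lra|left; apply Rinv_0_lt_compat; lra]).
    replace (INR 3) with 3 in H2 by (simpl; ring).
    assert (u n t <= u n t * (t + 1 + INR (S n)) / INR (S n)).
    { replace (u n t * (t + 1 + INR (S n)) / INR (S n)) with (u n t + u n t * (t+1) / INR (S n)) by (field; lra).
      assert (0 <= u n t * (t+1) / INR (S n)) by (unfold Rdiv; apply Rmult_le_pos; [nra|left; apply Rinv_0_lt_compat; lra]). lra. }
    nra.
Qed.

Lemma G_pos : forall x, 0 < x -> 0 < rgamma x.
Proof.
  assert (forall m x, 0 < x <= INR m + 2 -> 0 < rgamma x).
  { induction m as [|m IH]; intros x Hx.
    - simpl in Hx. apply G_pos_base; lra.
    - rewrite S_INR in Hx. pose proof (pos_INR m).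
      destruct (Rle_dec x (INR m + 2)) as [H1|H1]; [apply IH; lra|].
      pose proof (IH (x - 1) ltac:(lra)). rewrite (G_FE' (x-1) x) in H0 by ring.
      nra. }
  intros x Hx. destruct (INR_unbounded x) as [m Hm]. apply (H m). lra.
Qed.

Lemma cont_of_eps : forall f x0,
  (forall eps, 0 < eps -> exists d, 0 < d /\ forall x, Rabs (x - x0) < d -> Rabs (f x - f x0) < eps) ->
  continuity_pt f x0.
Proof.
  intros f x0 H. unfold continuity_pt, continue_in, limit1_in, limit_in.
  intros eps Heps. destruct (H eps Heps) as [d [Hd Hx]]. exists d. split; auto.
  intros x [_ Hxd]. simpl in *. unfold R_dist in *. auto.
Qed.

Lemma eps_of_cont : forall f x0, continuity_pt f x0 ->
  forall eps, 0 < eps -> exists d, 0 < d /\ forall x, Rabs (x - x0) < d -> Rabs (f x - f x0) < eps.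
Proof.
  intros f x0 H eps Heps. unfold continuity_pt, continue_in, limit1_in, limit_in in H.
  destruct (H eps Heps) as [d [Hd Hx]]. exists d. split; auto.
  intros x Hxd. destruct (Req_dec x x0) as [->|Hne].
  - rewrite Rminus_diag, Rabs_R0. lra.
  - apply (Hx x). simpl. unfold D_x, no_cond, R_dist. split; auto.
Qed.

Lemma cont_loc_ext : forall f g x0, continuity_pt f x0 ->
  (exists d, 0 < d /\ forall x, Rabs (x - x0) < d -> f x = g x) -> continuity_pt g x0.
Proof.
  intros f g x0 Hf [d0 [Hd0 He]]. apply cont_of_eps. intros eps Heps.
  destruct (eps_of_cont f x0 Hf eps Heps) as [d [Hd Hx]].
  exists (Rmin d d0). split; [apply Rmin_pos; auto|].
  intros x Hxd. rewrite <- (He x), <- (He x0).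
  - apply Hx. pose proof (Rmin_l d d0); lra.
  - rewrite Rminus_diag, Rabs_R0; lra.
  - pose proof (Rmin_r d d0); lra.
Qed.

Lemma continuity_pt_id' : forall x0, continuity_pt (fun x => x) x0.
Proof. intros. apply (derivable_continuous_pt id). apply derivable_pt_id. Qed.

Lemma my_abs_le : forall a b, Rabs a <= b -> - b <= a <= b.
Proof. intros a b H. pose proof (Rle_abs a). pose proof (Rle_abs (-a)). rewrite Rabs_Ropp in H1. lra. Qed.

Lemma poch_cont : forall m x0, continuity_pt (fun x => poch x m) x0.
Proof.
  induction m as [|m IH]; intros x0; cbn [poch].
  - apply continuity_pt_const. intros a b; reflexivity.
  - apply (continuity_pt_mult (fun x => poch x m) (fun x => x + INR m)); [apply IH|].
    apply (continuity_pt_plus (fun x => x) (fun _ => INR m)).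
    + apply continuity_pt_id'.
    + apply continuity_pt_const. intros a b; reflexivity.
Qed.

Lemma a_cont : forall k x0, continuity_pt (fun x => rgamma_seq x k) x0.
Proof.
  intros k x0. unfold rgamma_seq.
  apply (continuity_pt_div (fun x => poch x (S (S k))) (fun x => INR (fact (S k)) * Rpower (INR (S k)) x)).
  - apply poch_cont.
  - apply (continuity_pt_mult (fun _ => INR (fact (S k))) (fun x => Rpower (INR (S k)) x)).
    + apply continuity_pt_const. intros a b; reflexivity.
    + unfold Rpower. apply (continuity_pt_comp (fun x => x * ln (INR (S k))) exp).
      * apply (continuity_pt_mult (fun x => x) (fun _ => ln (INR (S k)))).
        apply continuity_pt_id'. apply continuity_pt_const. intros a b; reflexivity.
      * apply derivable_continuous_pt. apply derivable_pt_exp.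
  - pose proof (INR_fact_pos (S k)). pose proof (Rpower_pos (INR (S k)) x0). nra.
Qed.

Lemma G_approx : forall x k, 0 <= x <= 2 -> Rabs (rgamma_seq x k - rgamma x) <= 8 / INR (S k).
Proof.
  intros x k Hx. apply Rabs_le. split.
  - assert (rgamma x <= rgamma_seq x k + 8 / INR (S k)).
    { apply (lim_le _ _ _ k (G_cv x)). intros n Hn.
      pose proof (cb x k (n - k) Hx). replace (k + (n - k))%nat with n in H by lia.
      apply my_abs_le in H. lra. }
    lra.
  - assert (rgamma_seq x k - 8 / INR (S k) <= rgamma x).
    { apply (lim_ge _ _ _ k (G_cv x)). intros n Hn.
      pose proof (cb x k (n - k) Hx). replace (k + (n - k))%nat with n in H by lia.
      apply my_abs_le in H. lra. }
    lra.
Qed.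

Lemma G_cont_base : forall x0, 0 < x0 < 2 -> continuity_pt rgamma x0.
Proof.
  intros x0 Hx0. apply cont_of_eps. intros eps Heps.
  destruct (INR_unbounded (24 / eps)) as [k Hk].
  pose proof (INR_S_pos k).
  assert (Hk' : 8 / INR (S k) < eps / 3).
  { rewrite S_INR in *. pose proof (pos_INR k).
    apply Rmult_lt_reg_r with (INR k + 1); [lra|].
    unfold Rdiv at 1. rewrite Rmult_assoc, Rinv_l by lra.
    apply Rmult_lt_compat_l with (r := eps) in Hk; [|lra].
    replace (eps * (24 / eps)) with 24 in Hk by (field; lra). nra. }
  destruct (eps_of_cont _ x0 (a_cont k x0) (eps/3) ltac:(lra)) as [d [Hd Hx]].
  exists (Rmin d (Rmin x0 (2 - x0))). split.
  { apply Rmin_pos; [lra|apply Rmin_pos; lra]. }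
  intros x Hxd. pose proof (Rmin_l d (Rmin x0 (2 - x0))). pose proof (Rmin_r d (Rmin x0 (2 - x0))).
  pose proof (Rmin_l x0 (2 - x0)). pose proof (Rmin_r x0 (2 - x0)).
  apply Rabs_def2 in Hxd as Hxd'.
  pose proof (G_approx x k ltac:(lra)). pose proof (G_approx x0 k ltac:(lra)).
  specialize (Hx x ltac:(lra)).
  replace (rgamma x - rgamma x0) with
    (- (rgamma_seq x k - rgamma x) + (rgamma_seq x k - rgamma_seq x0 k) + (rgamma_seq x0 k - rgamma x0)) by ring.
  eapply Rle_lt_trans. apply Rabs_triang. eapply Rle_lt_trans. apply Rplus_le_compat_r. apply Rabs_triang.
  rewrite Rabs_Ropp. lra.
Qed.

Lemma G_cont : forall x0, continuity_pt rgamma x0.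
Proof.
  assert (Hlow : forall m x0, - INR m < x0 < 2 -> continuity_pt rgamma x0).
  { induction m as [|m IH]; intros x0 Hx.
    - simpl in Hx. apply G_cont_base; lra.
    - rewrite S_INR in Hx. destruct (Rlt_dec 0 x0) as [H0|H0]; [apply G_cont_base; lra|].
      apply cont_loc_ext with (fun x => x * rgamma (x+1)).
      2:{ exists 1. split; [lra|]. intros x _. symmetry. apply G_FE. }
      + apply (continuity_pt_mult (fun x => x) (fun x => rgamma (x+1))); [apply continuity_pt_id'|].
        apply (continuity_pt_comp (fun x => x + 1) rgamma).
        * apply (continuity_pt_plus (fun x => x) (fun _ => 1)); [apply continuity_pt_id'|].
          apply continuity_pt_const. intros a b; reflexivity.
        * apply IH. lra. }
  assert (Hhigh : forall m x0, 0 < x0 < INR m + 2 -> continuity_pt rgamma x0).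
  { induction m as [|m IH]; intros x0 Hx.
    - simpl in Hx. apply G_cont_base; lra.
    - rewrite S_INR in Hx. pose proof (pos_INR m).
      destruct (Rlt_dec x0 (INR m + 2)) as [H0|H0]; [apply IH; lra|].
      apply cont_loc_ext with (fun x => rgamma (x - 1) / (x - 1)).
      + apply (continuity_pt_div (fun x => rgamma (x - 1)) (fun x => x - 1)).
        * apply (continuity_pt_comp (fun x => x - 1) rgamma).
          -- apply (continuity_pt_minus (fun x => x) (fun _ => 1)); [apply continuity_pt_id'|].
             apply continuity_pt_const. intros a b; reflexivity.
          -- apply IH. lra.
        * apply (continuity_pt_minus (fun x => x) (fun _ => 1)); [apply continuity_pt_id'|].
          apply continuity_pt_const. intros a b; reflexivity.
        * lra.
      + exists 1. split; [lra|]. intros x Hx1. apply Rabs_def2 in Hx1.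
        rewrite (G_FE' (x - 1) x) by ring. field. lra. }
  intros x0. destruct (INR_unbounded (Rabs x0)) as [m Hm].
  pose proof (Rle_abs x0). pose proof (Rle_abs (-x0)). rewrite Rabs_Ropp in H0.
  destruct (Rlt_dec 0 x0).
  - apply (Hhigh m). lra.
  - apply (Hlow (S m)). rewrite S_INR. lra.
Qed.

From Coquelicot Require Import Coquelicot.
Open Scope R_scope.

Lemma exR : forall f, (forall x, continuity_pt f x) -> forall a b, ex_RInt f a b.
Proof.
  intros f Hf a b. apply (ex_RInt_continuous (V:=R_CompleteNormedModule)). intros z _.
  apply continuity_pt_filterlim. apply Hf.
Qed.

Lemma RL : forall f a b, (forall x, continuity_pt f x) ->
  RInt (fun s => f (a + b - s)) a b = RInt f a b.
Proof.
  intros f a b Hf.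
  pose proof (RInt_comp_lin f (-1) (a+b) a b (exR f Hf _ _)) as H.
  replace (-1 * a + (a + b)) with b in H by ring.
  replace (-1 * b + (a + b)) with a in H by ring.
  assert (E : RInt (fun y => scal (-1) (f (-1 * y + (a + b)))) a b =
              RInt (fun y => opp (f (a + b - y))) a b).
  { apply RInt_ext. intros x _. change (-1 * f (-1 * x + (a + b)) = - f (a + b - x)).
    replace (-1 * x + (a + b)) with (a + b - x) by ring. ring. }
  assert (H2 : RInt (fun y => opp (f (a + b - y))) a b = RInt f b a) by exact (eq_trans (eq_sym E) H).
  clear H E. rename H2 into H. rewrite (RInt_opp (V:=R_CompleteNormedModule)) in H.
  - rewrite <- (opp_RInt_swap f a b (exR f Hf _ _)) in H.
    change (- RInt (fun s => f (a + b - s)) a b = - RInt f a b) in H. lra.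
  - apply exR. intros x. apply (continuity_pt_comp (fun s => a + b - s) f).
    + apply (continuity_pt_minus (fun _ => a + b) (fun s => s)).
      apply continuity_pt_const; intros u v; reflexivity. apply continuity_pt_id'.
    + apply Hf.
Qed.

Lemma RInt_zero : forall a b, RInt (fun _ => 0) a b = 0.
Proof.
  intros. rewrite (RInt_const (V:=R_CompleteNormedModule)). change ((b - a) * 0 = 0). ring.
Qed.

Lemma ind_int : forall (P : R -> Prop) F a lo hi b, a <= lo -> hi <= b ->
  (forall s, P s <-> lo <= s <= hi) -> (forall x, continuity_pt F x) ->
  ex_RInt (fun s => indic P s * F s) a b /\
  (lo <= hi -> RInt (fun s => indic P s * F s) a b = RInt F lo hi) /\
  (hi < lo -> RInt (fun s => indic P s * F s) a b = 0).
Proof.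
  intros P F a lo hi b Ha Hb HP HF.
  assert (I0 : forall s, ~ (lo <= s <= hi) -> indic P s * F s = 0).
  { intros s Hs. unfold indic. destruct (excluded_middle_informative (P s)) as [H|H].
    - apply HP in H. contradiction.
    - ring. }
  assert (I1 : forall s, lo <= s <= hi -> indic P s * F s = F s).
  { intros s Hs. unfold indic. destruct (excluded_middle_informative (P s)) as [H|H].
    - ring.
    - exfalso. apply H. apply HP. auto. }
  destruct (Rle_dec lo hi) as [Hlh|Hlh].
  - assert (E1 : ex_RInt (fun s => indic P s * F s) a lo).
    { apply (ex_RInt_ext (V:=R_CompleteNormedModule) (fun _ => 0)).
      - intros x Hx. rewrite Rmin_left, Rmax_right in Hx by lra. symmetry. apply I0. lra.
      - apply ex_RInt_const. }
    assert (E2 : ex_RInt (fun s => indic P s * F s) lo hi).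
    { apply (ex_RInt_ext (V:=R_CompleteNormedModule) F).
      - intros x Hx. rewrite Rmin_left, Rmax_right in Hx by lra. symmetry. apply I1. lra.
      - apply exR; auto. }
    assert (E3 : ex_RInt (fun s => indic P s * F s) hi b).
    { apply (ex_RInt_ext (V:=R_CompleteNormedModule) (fun _ => 0)).
      - intros x Hx. rewrite Rmin_left, Rmax_right in Hx by lra. symmetry. apply I0. lra.
      - apply ex_RInt_const. }
    split; [|split].
    + apply (ex_RInt_Chasles (V:=R_CompleteNormedModule)) with lo; auto.
      apply (ex_RInt_Chasles (V:=R_CompleteNormedModule)) with hi; auto.
    + intros _. rewrite <- (RInt_Chasles (V:=R_CompleteNormedModule) _ a lo b); auto.
      2:{ apply (ex_RInt_Chasles (V:=R_CompleteNormedModule)) with hi; auto. }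
      rewrite <- (RInt_Chasles (V:=R_CompleteNormedModule) _ lo hi b); auto.
      rewrite (RInt_ext (V:=R_CompleteNormedModule) _ (fun _ => 0) a lo).
      2:{ intros x Hx. rewrite Rmin_left, Rmax_right in Hx by lra. apply I0. lra. }
      rewrite (RInt_ext (V:=R_CompleteNormedModule) _ (fun _ => 0) hi b).
      2:{ intros x Hx. rewrite Rmin_left, Rmax_right in Hx by lra. apply I0. lra. }
      rewrite (RInt_ext (V:=R_CompleteNormedModule) _ F lo hi).
      2:{ intros x Hx. rewrite Rmin_left, Rmax_right in Hx by lra. apply I1. lra. }
      rewrite !RInt_zero. change (0 + (RInt F lo hi + 0) = RInt F lo hi). ring.
    + intros; lra.
  - assert (Z : forall s, indic P s * F s = 0) by (intros s; apply I0; lra).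
    split; [|split].
    + apply (ex_RInt_ext (V:=R_CompleteNormedModule) (fun _ => 0)).
      * intros x _. symmetry; apply Z.
      * apply ex_RInt_const.
    + intros; lra.
    + intros _. rewrite (RInt_ext (V:=R_CompleteNormedModule) _ (fun _ => 0) a b).
      * apply RInt_zero.
      * intros x _. apply Z.
Qed.

Lemma GL : forall psi lo hi, lo <= hi -> (forall x, continuity_pt psi x) ->
  (forall s, psi (lo + hi - 1 - s) = - psi s) ->
  (forall s, lo <= s <= hi -> lo + hi - 1 <= 2 * s -> 0 <= psi s) ->
  0 <= RInt psi lo hi.
Proof.
  intros psi lo hi Hlh Hc Ha Hp.
  destruct (Rle_dec 1 (hi - lo)) as [H1|H1].
  - rewrite <- (RInt_Chasles (V:=R_CompleteNormedModule) psi lo (hi - 1) hi) by (apply exR; auto).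
    assert (Z : RInt psi lo (hi - 1) = 0).
    { pose proof (RL psi lo (hi - 1) Hc) as HR.
      rewrite (RInt_ext (V:=R_CompleteNormedModule) _ (fun s => opp (psi s))) in HR.
      2:{ intros x _. replace (lo + (hi - 1) - x) with (lo + hi - 1 - x) by ring. apply Ha. }
      rewrite (RInt_opp (V:=R_CompleteNormedModule)) in HR by (apply exR; auto).
      change (- RInt psi lo (hi - 1) = RInt psi lo (hi - 1)) in HR. lra. }
    change (0 <= RInt psi lo (hi - 1) + RInt psi (hi - 1) hi). rewrite Z.
    rewrite Rplus_0_l. apply RInt_ge_0; [lra| apply exR; auto|].
    intros x Hx. apply Hp; lra.
  - apply RInt_ge_0; [lra| apply exR; auto|]. intros x Hx. apply Hp; lra.
Qed.

Lemma GA : forall F1 F2 H lo hi, lo <= hi ->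
  (forall x, continuity_pt F1 x) -> (forall x, continuity_pt F2 x) -> (forall x, continuity_pt H x) ->
  (forall s, F1 s - F2 s = H s - H (s - 1)) ->
  (forall s, lo <= s <= hi -> lo + hi - 1 <= 2 * s -> 0 <= H s - H (lo + hi - 1 - s)) ->
  RInt F2 lo hi <= RInt F1 lo hi.
Proof.
  intros F1 F2 H lo hi Hlh C1 C2 CH Hid Hp.
  assert (CH1 : forall x, continuity_pt (fun s => H (s - 1)) x).
  { intros x. apply (continuity_pt_comp (fun s => s - 1) H); [|apply CH].
    apply (continuity_pt_minus (fun s => s) (fun _ => 1)). apply continuity_pt_id'.
    apply continuity_pt_const; intros u v; reflexivity. }
  assert (E : RInt F1 lo hi - RInt F2 lo hi = RInt (fun s => H s - H (lo + hi - 1 - s)) lo hi).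
  { change (minus (RInt F1 lo hi) (RInt F2 lo hi) = RInt (fun s => H s - H (lo + hi - 1 - s)) lo hi).
    rewrite <- (RInt_minus (V:=R_CompleteNormedModule)) by (apply exR; auto).
    rewrite (RInt_ext (V:=R_CompleteNormedModule) _ (fun s => minus (H s) (H (s - 1)))).
    2:{ intros x _. apply Hid. }
    rewrite (RInt_minus (V:=R_CompleteNormedModule)) by (apply exR; auto).
    rewrite <- (RL (fun s => H (s - 1)) lo hi CH1).
    rewrite <- (RInt_minus (V:=R_CompleteNormedModule)).
    2:{ apply exR; auto. }
    2:{ apply exR. intros x. apply (continuity_pt_comp (fun s => lo + hi - s) (fun s => H (s - 1))); [|apply CH1].
        apply (continuity_pt_minus (fun _ => lo + hi) (fun s => s)).
        apply continuity_pt_const; intros u v; reflexivity. apply continuity_pt_id'. }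
    apply RInt_ext. intros x _. change (H x - H (lo + hi - x - 1) = H x - H (lo + hi - 1 - x)).
    replace (lo + hi - x - 1) with (lo + hi - 1 - x) by ring. reflexivity. }
  assert (0 <= RInt (fun s => H s - H (lo + hi - 1 - s)) lo hi).
  { apply GL; auto.
    - intros x. apply (continuity_pt_minus H (fun s => H (lo + hi - 1 - s))); [apply CH|].
      apply (continuity_pt_comp (fun s => lo + hi - 1 - s) H); [|apply CH].
      apply (continuity_pt_minus (fun _ => lo + hi - 1) (fun s => s)).
      apply continuity_pt_const; intros u v; reflexivity. apply continuity_pt_id'.
    - intros s. replace (lo + hi - 1 - (lo + hi - 1 - s)) with s by ring. ring. }
  lra.
Qed.

Lemma GB : forall F1 F2 H lo hi, lo <= hi ->
  (forall x, continuity_pt F1 x) -> (forall x, continuity_pt F2 x) -> (forall x, continuity_pt H x) ->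
  (forall s, F1 s - F2 s = H s - H (s + 1)) ->
  (forall s, lo <= s <= hi -> lo + hi - 1 <= 2 * s -> 0 <= H (lo + hi - s) - H (s + 1)) ->
  RInt F2 lo hi <= RInt F1 lo hi.
Proof.
  intros F1 F2 H lo hi Hlh C1 C2 CH Hid Hp.
  assert (CH1 : forall x, continuity_pt (fun s => H (s + 1)) x).
  { intros x. apply (continuity_pt_comp (fun s => s + 1) H); [|apply CH].
    apply (continuity_pt_plus (fun s => s) (fun _ => 1)). apply continuity_pt_id'.
    apply continuity_pt_const; intros u v; reflexivity. }
  assert (CH2 : forall x, continuity_pt (fun s => H (lo + hi - s)) x).
  { intros x. apply (continuity_pt_comp (fun s => lo + hi - s) H); [|apply CH].
    apply (continuity_pt_minus (fun _ => lo + hi) (fun s => s)).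
    apply continuity_pt_const; intros u v; reflexivity. apply continuity_pt_id'. }
  assert (E : RInt F1 lo hi - RInt F2 lo hi = RInt (fun s => H (lo + hi - s) - H (s + 1)) lo hi).
  { change (minus (RInt F1 lo hi) (RInt F2 lo hi) = RInt (fun s => H (lo + hi - s) - H (s + 1)) lo hi).
    rewrite <- (RInt_minus (V:=R_CompleteNormedModule)) by (apply exR; auto).
    rewrite (RInt_ext (V:=R_CompleteNormedModule) _ (fun s => minus (H s) (H (s + 1)))).
    2:{ intros x _. apply Hid. }
    rewrite (RInt_minus (V:=R_CompleteNormedModule)) by (apply exR; auto).
    rewrite <- (RL H lo hi CH).
    rewrite <- (RInt_minus (V:=R_CompleteNormedModule)) by (apply exR; auto).
    reflexivity. }
  assert (0 <= RInt (fun s => H (lo + hi - s) - H (s + 1)) lo hi).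
  { apply GL; auto.
    - intros x. apply (continuity_pt_minus (fun s => H (lo + hi - s)) (fun s => H (s + 1))); auto.
    - intros s. replace (lo + hi - (lo + hi - 1 - s)) with (s + 1) by ring.
      replace (lo + hi - 1 - s + 1) with (lo + hi - s) by ring. ring. }
  lra.
Qed.

Lemma c_id : forall x, continuity_pt (fun s => s) x.
Proof. apply continuity_pt_id'. Qed.
Lemma c_const : forall c x, continuity_pt (fun _ => c) x.
Proof. intros. apply continuity_pt_const. intros u v; reflexivity. Qed.
Lemma c_minus : forall f g x, continuity_pt f x -> continuity_pt g x -> continuity_pt (fun s => f s - g s) x.
Proof. intros. apply (continuity_pt_minus f g); auto. Qed.
Lemma c_plus : forall f g x, continuity_pt f x -> continuity_pt g x -> continuity_pt (fun s => f s + g s) x.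
Proof. intros. apply (continuity_pt_plus f g); auto. Qed.
Lemma c_mult : forall f g x, continuity_pt f x -> continuity_pt g x -> continuity_pt (fun s => f s * g s) x.
Proof. intros. apply (continuity_pt_mult f g); auto. Qed.

Lemma c_G : forall phi x, continuity_pt phi x -> continuity_pt (fun s => rgamma (phi s)) x.
Proof. intros. apply (continuity_pt_comp phi rgamma); auto. apply G_cont. Qed.

Lemma binom_cont : forall a phi x, continuity_pt phi x -> continuity_pt (fun s => binom a (phi s)) x.
Proof.
  intros. unfold binom.
  apply c_mult; [apply c_mult|].
  - apply c_const.
  - apply c_G. apply c_plus; auto. apply c_const.
  - apply c_G. apply c_plus; [apply c_minus|]; auto; apply c_const.
Qed.

Ltac aff := repeat (apply c_minus || apply c_plus || apply c_id || apply c_const).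

Lemma prod_cont : forall a1 a2 phi1 phi2,
  (forall x, continuity_pt phi1 x) -> (forall x, continuity_pt phi2 x) ->
  forall x, continuity_pt (fun s => binom a1 (phi1 s) * binom a2 (phi2 s)) x.
Proof. intros. apply c_mult; apply binom_cont; auto. Qed.

Goal forall M n x, continuity_pt (fun s => binom (M-1) (s - 1) * binom (M-2) (n - 1 - (s - 1))) x.
Proof. intros. apply (prod_cont _ _ (fun s => s - 1) (fun s => n - 1 - (s - 1))); intros; aff. Qed.

Lemma binom_eq : forall a s A S T, a + 1 = A -> s + 1 = S -> a - s + 1 = T ->
  binom a s = / rgamma A * rgamma S * rgamma T.
Proof. intros; subst; reflexivity. Qed.

Lemma idA : forall M n s, 1 < M ->
  binom (M-1) s * binom (M-1) (n-s) - binom M s * binom (M-2) (n-s) =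
  binom (M-1) s * binom (M-2) (n-1-s) - binom (M-1) (s-1) * binom (M-2) (n-1-(s-1)).
Proof.
  intros M n s HM.
  rewrite (binom_eq (M-1) s M (s+1) (M-s)) by ring.
  rewrite (binom_eq (M-1) (n-s) M (n-s+1) (M-n+s)) by ring.
  rewrite (binom_eq M s (M+1) (s+1) (M+1-s)) by ring.
  rewrite (binom_eq (M-2) (n-s) (M-1) (n-s+1) (M-1-n+s)) by ring.
  rewrite (binom_eq (M-2) (n-1-s) (M-1) (n-s) (M-n+s)) by ring.
  rewrite (binom_eq (M-1) (s-1) M s (M+1-s)) by ring.
  rewrite (binom_eq (M-2) (n-1-(s-1)) (M-1) (n-s+1) (M-1-n+s)) by ring.
  rewrite (G_FE' (M-1) M) by ring. rewrite (G_FE' M (M+1)) by ring.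
  rewrite (G_FE' (M-s) (M+1-s)) by ring. rewrite (G_FE' (n-s) (n-s+1)) by ring.
  rewrite (G_FE' s (s+1)) by ring. rewrite (G_FE' (M-1-n+s) (M-n+s)) by ring.
  pose proof (G_pos (M+1) ltac:(lra)).
  field. repeat split; lra.
Qed.

Lemma posA : forall M n s, 1 < M -> 0 <= s <= M -> 0 <= n - s <= M -> n - 1 <= 2 * s ->
  0 <= binom (M-1) s * binom (M-2) (n-1-s) - binom (M-1) (n-1-s) * binom (M-2) (n-1-(n-1-s)).
Proof.
  intros M n s HM H1 H2 H3.
  rewrite (binom_eq (M-1) s M (s+1) (M-s)) by ring.
  rewrite (binom_eq (M-2) (n-1-s) (M-1) (n-s) (M-n+s)) by ring.
  rewrite (binom_eq (M-1) (n-1-s) M (n-s) (M-n+s+1)) by ring.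
  rewrite (binom_eq (M-2) (n-1-(n-1-s)) (M-1) (s+1) (M-1-s)) by ring.
  rewrite (G_FE' (M-n+s) (M-n+s+1)) by ring. rewrite (G_FE' (M-1-s) (M-s)) by ring.
  pose proof (G_pos M ltac:(lra)). pose proof (G_pos (M-1) ltac:(lra)).
  pose proof (G_nonneg (s+1) ltac:(lra)). pose proof (G_nonneg (M-s) ltac:(lra)).
  pose proof (G_nonneg (n-s) ltac:(lra)). pose proof (G_nonneg (M-n+s+1) ltac:(lra)).
  pose proof (Rinv_0_lt_compat _ H). pose proof (Rinv_0_lt_compat _ H0).
  match goal with |- 0 <= ?e => replace e with
    ((/ rgamma M * / rgamma (M-1)) * ((rgamma (s+1) * rgamma (M-s)) * (rgamma (n-s) * rgamma (M-n+s+1))) * (2*s - n + 1)) by ring end.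
  apply Rmult_le_pos; [|lra]. apply Rmult_le_pos; [apply Rmult_le_pos; lra|].
  apply Rmult_le_pos; apply Rmult_le_pos; lra.
Qed.

Lemma posB : forall M n s, 1 < M -> 0 <= s <= M -> 0 <= n + 1 - s <= M -> n <= 2 * s ->
  0 <= binom (M-1) (n-s) * binom (M-2) (n-1-(n-s)) - binom (M-1) s * binom (M-2) (n-1-s).
Proof.
  intros M n s HM H1 H2 H3.
  rewrite (binom_eq (M-1) s M (s+1) (M-s)) by ring.
  rewrite (binom_eq (M-2) (n-1-s) (M-1) (n-s) (M-n+s)) by ring.
  rewrite (binom_eq (M-1) (n-s) M (n-s+1) (M-n+s)) by ring.
  rewrite (binom_eq (M-2) (n-1-(n-s)) (M-1) s (M-s)) by ring.
  rewrite (G_FE' s (s+1)) by ring. rewrite (G_FE' (n-s) (n-s+1)) by ring.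
  pose proof (G_pos M ltac:(lra)). pose proof (G_pos (M-1) ltac:(lra)).
  pose proof (G_nonneg (s+1) ltac:(lra)). pose proof (G_nonneg (M-s) ltac:(lra)).
  pose proof (G_nonneg (n-s+1) ltac:(lra)). pose proof (G_nonneg (M-n+s) ltac:(lra)).
  pose proof (Rinv_0_lt_compat _ H). pose proof (Rinv_0_lt_compat _ H0).
  match goal with |- 0 <= ?e => replace e with
    ((/ rgamma M * / rgamma (M-1)) * ((rgamma (s+1) * rgamma (M-s)) * (rgamma (n-s+1) * rgamma (M-n+s))) * (2*s - n)) by ring end.
  apply Rmult_le_pos; [|lra]. apply Rmult_le_pos; [apply Rmult_le_pos; lra|].
  apply Rmult_le_pos; apply Rmult_le_pos; lra.
Qed.

Lemma idC : forall M n s, 1 < M ->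
  binom (M-1) s * binom (M-1) (n-s) - binom M (s+1) * binom (M-2) (n-s-1) =
  binom (M-1) s * binom (M-2) (n-s) - binom (M-1) (s+1) * binom (M-2) (n-(s+1)).
Proof.
  intros M n s HM.
  rewrite (binom_eq (M-1) s M (s+1) (M-s)) by ring.
  rewrite (binom_eq (M-1) (n-s) M (n-s+1) (M-n+s)) by ring.
  rewrite (binom_eq M (s+1) (M+1) (s+2) (M-s)) by ring.
  rewrite (binom_eq (M-2) (n-s-1) (M-1) (n-s) (M-n+s)) by ring.
  rewrite (binom_eq (M-2) (n-s) (M-1) (n-s+1) (M-1-n+s)) by ring.
  rewrite (binom_eq (M-1) (s+1) M (s+2) (M-1-s)) by ring.
  rewrite (binom_eq (M-2) (n-(s+1)) (M-1) (n-s) (M-n+s)) by ring.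
  rewrite (G_FE' (M-1) M) by ring. rewrite (G_FE' M (M+1)) by ring.
  rewrite (G_FE' (s+1) (s+2)) by ring. rewrite (G_FE' (n-s) (n-s+1)) by ring.
  rewrite (G_FE' (M-1-s) (M-s)) by ring. rewrite (G_FE' (M-1-n+s) (M-n+s)) by ring.
  pose proof (G_pos (M+1) ltac:(lra)).
  field. repeat split; lra.
Qed.

Lemma posC : forall M n s, 1 < M -> 0 <= s + 1 <= M -> 0 <= n + 1 - s <= M -> n - 1 <= 2 * s ->
  0 <= binom (M-1) (n-s) * binom (M-2) (n-(n-s)) - binom (M-1) (s+1) * binom (M-2) (n-(s+1)).
Proof.
  intros M n s HM H1 H2 H3.
  rewrite (binom_eq (M-1) (n-s) M (n-s+1) (M-n+s)) by ring.
  rewrite (binom_eq (M-2) (n-(n-s)) (M-1) (s+1) (M-1-s)) by ring.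
  rewrite (binom_eq (M-1) (s+1) M (s+2) (M-1-s)) by ring.
  rewrite (binom_eq (M-2) (n-(s+1)) (M-1) (n-s) (M-n+s)) by ring.
  rewrite (G_FE' (s+1) (s+2)) by ring. rewrite (G_FE' (n-s) (n-s+1)) by ring.
  pose proof (G_pos M ltac:(lra)). pose proof (G_pos (M-1) ltac:(lra)).
  pose proof (G_nonneg (s+2) ltac:(lra)). pose proof (G_nonneg (M-1-s) ltac:(lra)).
  pose proof (G_nonneg (n-s+1) ltac:(lra)). pose proof (G_nonneg (M-n+s) ltac:(lra)).
  pose proof (Rinv_0_lt_compat _ H). pose proof (Rinv_0_lt_compat _ H0).
  match goal with |- 0 <= ?e => replace e with
    ((/ rgamma M * / rgamma (M-1)) * ((rgamma (s+2) * rgamma (M-1-s)) * (rgamma (n-s+1) * rgamma (M-n+s))) * (2*s + 1 - n)) by ring end.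
  apply Rmult_le_pos; [|lra]. apply Rmult_le_pos; [apply Rmult_le_pos; lra|].
  apply Rmult_le_pos; apply Rmult_le_pos; lra.
Qed.

Lemma Rabs_le_iff : forall x q, Rabs x <= q <-> - q <= x <= q.
Proof.
  intros. split; [intros H; apply my_abs_le; exact H|]. intros H. apply Rabs_le. auto.
Qed.

Lemma Rmax_le_iff : forall a b s, Rmax a b <= s <-> a <= s /\ b <= s.
Proof. intros. unfold Rmax. destruct (Rle_dec a b); split; intros; lra. Qed.
Lemma Rmin_ge_iff : forall a b s, s <= Rmin a b <-> s <= a /\ s <= b.
Proof. intros. unfold Rmin. destruct (Rle_dec a b); split; intros; lra. Qed.

Lemma sum_lohi : forall a b c n, n - Rmax (Rmax a b) c = Rmin (Rmin (n - a) (n - b)) (n - c).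
Proof.
  intros. unfold Rmax, Rmin.
  repeat (destruct (Rle_dec _ _)); lra.
Qed.

Lemma setA_iff : forall M q n s, setA M q n s <->
  Rmax (Rmax 0 (n - M)) ((n - q) / 2) <= s <= Rmin (Rmin M n) ((n + q) / 2).
Proof.
  intros. unfold setA. rewrite Rabs_le_iff, !Rmax_le_iff, !Rmin_ge_iff. split; intros; repeat match goal with H : _ /\ _ |- _ => destruct H end; repeat split; lra.
Qed.

Lemma setB_iff : forall M q n s, setB M q n s <->
  Rmax (Rmax 0 (n + 1 - M)) ((n + 1 - q) / 2) <= s <= Rmin (Rmin M (n + 1)) ((n + 1 + q) / 2).
Proof.
  intros. unfold setB. rewrite Rabs_le_iff, !Rmax_le_iff, !Rmin_ge_iff. split; intros; repeat match goal with H : _ /\ _ |- _ => destruct H end; repeat split; lra.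
Qed.

Lemma setC_iff : forall M q n s, setC M q n s <->
  Rmax (Rmax (-1) (n + 1 - M)) ((n - q) / 2) <= s <= Rmin (Rmin (M - 1) (n + 1)) ((n + q) / 2).
Proof.
  intros. unfold setC. rewrite Rabs_le_iff, !Rmax_le_iff, !Rmin_ge_iff. split; intros; repeat match goal with H : _ /\ _ |- _ => destruct H end; repeat split; lra.
Qed.

Theorem lemma2 (M q n : R) (hM : 1 < M) (hq : 0 < q) (hn : -2 < n) :
  (exists (pr1 : Riemann_integrable
             (fun s => indic (setA M q n) s * (binom (M - 1) s * binom (M - 1) (n - s))) (-1) (M + 1))
          (pr2 : Riemann_integrable
             (fun s => indic (setA M q n) s * (binom M s * binom (M - 2) (n - s))) (-1) (M + 1)),
      RiemannInt pr1 >= RiemannInt pr2) /\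
  (exists (pr1 : Riemann_integrable
             (fun s => indic (setB M q n) s * (binom (M - 1) s * binom (M - 1) (n - s))) (-1) (M + 1))
          (pr2 : Riemann_integrable
             (fun s => indic (setB M q n) s * (binom M s * binom (M - 2) (n - s))) (-1) (M + 1)),
      RiemannInt pr1 <= RiemannInt pr2) /\
  (exists (pr1 : Riemann_integrable
             (fun s => indic (setC M q n) s * (binom (M - 1) s * binom (M - 1) (n - s))) (-1) (M + 1))
          (pr2 : Riemann_integrable
             (fun s => indic (setC M q n) s * (binom M (s + 1) * binom (M - 2) (n - s - 1))) (-1) (M + 1)),
      RiemannInt pr1 >= RiemannInt pr2).
Proof.
  assert (Cf : forall x, continuity_pt (fun s => binom (M - 1) s * binom (M - 1) (n - s)) x).
  { apply (prod_cont _ _ (fun s => s) (fun s => n - s)); intros; aff. }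
  assert (Cg : forall x, continuity_pt (fun s => binom M s * binom (M - 2) (n - s)) x).
  { apply (prod_cont _ _ (fun s => s) (fun s => n - s)); intros; aff. }
  assert (Cg2 : forall x, continuity_pt (fun s => binom M (s + 1) * binom (M - 2) (n - s - 1)) x).
  { apply (prod_cont _ _ (fun s => s + 1) (fun s => n - s - 1)); intros; aff. }
  assert (Ch : forall x, continuity_pt (fun s => binom (M - 1) s * binom (M - 2) (n - 1 - s)) x).
  { apply (prod_cont _ _ (fun s => s) (fun s => n - 1 - s)); intros; aff. }
  assert (Ch1 : forall x, continuity_pt (fun s => binom (M - 1) (s - 1) * binom (M - 2) (n - 1 - (s - 1))) x).
  { apply (prod_cont _ _ (fun s => s - 1) (fun s => n - 1 - (s - 1))); intros; aff. }
  assert (Ck : forall x, continuity_pt (fun s => binom (M - 1) s * binom (M - 2) (n - s)) x).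
  { apply (prod_cont _ _ (fun s => s) (fun s => n - s)); intros; aff. }
  split; [|split].
  -
    set (lo := Rmax (Rmax 0 (n - M)) ((n - q) / 2)).
    set (hi := Rmin (Rmin M n) ((n + q) / 2)).
    assert (Hs : lo + hi = n) by (unfold lo, hi, Rmax, Rmin; repeat (destruct (Rle_dec _ _)); lra).
    assert (Hlo : 0 <= lo) by (unfold lo, Rmax; repeat (destruct (Rle_dec _ _)); lra).
    assert (Hhi : hi <= M) by (unfold hi, Rmin; repeat (destruct (Rle_dec _ _)); lra).
    destruct (ind_int (setA M q n) _ (-1) lo hi (M + 1) ltac:(lra) ltac:(lra) (setA_iff M q n) Cf) as [E1 [R1 Z1]].
    destruct (ind_int (setA M q n) _ (-1) lo hi (M + 1) ltac:(lra) ltac:(lra) (setA_iff M q n) Cg) as [E2 [R2 Z2]].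
    exists (ex_RInt_Reals_0 _ _ _ E1), (ex_RInt_Reals_0 _ _ _ E2).
    rewrite <- !RInt_Reals. apply Rle_ge.
    destruct (Rle_dec lo hi) as [Hlh|Hlh].
    + rewrite (R1 Hlh), (R2 Hlh).
      apply (GA _ _ _ lo hi Hlh Cf Cg Ch).
      * intros s. apply idA; auto.
      * intros s Hs1 Hs2. replace (lo + hi - 1 - s) with (n - 1 - s) by lra.
        assert (Hm : setA M q n s) by (apply setA_iff; auto). destruct Hm as [_ [Hm1 Hm2]].
        apply posA; auto; lra.
    + rewrite (Z1 ltac:(lra)), (Z2 ltac:(lra)). lra.
  -
    set (lo := Rmax (Rmax 0 (n + 1 - M)) ((n + 1 - q) / 2)).
    set (hi := Rmin (Rmin M (n + 1)) ((n + 1 + q) / 2)).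
    assert (Hs : lo + hi = n + 1) by (unfold lo, hi, Rmax, Rmin; repeat (destruct (Rle_dec _ _)); lra).
    assert (Hlo : 0 <= lo) by (unfold lo, Rmax; repeat (destruct (Rle_dec _ _)); lra).
    assert (Hhi : hi <= M) by (unfold hi, Rmin; repeat (destruct (Rle_dec _ _)); lra).
    destruct (ind_int (setB M q n) _ (-1) lo hi (M + 1) ltac:(lra) ltac:(lra) (setB_iff M q n) Cf) as [E1 [R1 Z1]].
    destruct (ind_int (setB M q n) _ (-1) lo hi (M + 1) ltac:(lra) ltac:(lra) (setB_iff M q n) Cg) as [E2 [R2 Z2]].
    exists (ex_RInt_Reals_0 _ _ _ E1), (ex_RInt_Reals_0 _ _ _ E2).
    rewrite <- !RInt_Reals.
    destruct (Rle_dec lo hi) as [Hlh|Hlh].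
    + rewrite (R1 Hlh), (R2 Hlh).
      apply (GB _ _ _ lo hi Hlh Cg Cf Ch1).
      * intros s. pose proof (idA M n s hM). cbv beta.
        replace (s + 1 - 1) with s by ring. lra.
      * intros s Hs1 Hs2. cbv beta. replace (lo + hi - s - 1) with (n - s) by lra.
        replace (s + 1 - 1) with s by ring.
        assert (Hm : setB M q n s) by (apply setB_iff; auto). destruct Hm as [_ [Hm1 Hm2]].
        apply posB; auto; lra.
    + rewrite (Z1 ltac:(lra)), (Z2 ltac:(lra)). lra.
  -
    set (lo := Rmax (Rmax (-1) (n + 1 - M)) ((n - q) / 2)).
    set (hi := Rmin (Rmin (M - 1) (n + 1)) ((n + q) / 2)).
    assert (Hs : lo + hi = n) by (unfold lo, hi, Rmax, Rmin; repeat (destruct (Rle_dec _ _)); lra).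
    assert (Hlo : -1 <= lo) by (unfold lo, Rmax; repeat (destruct (Rle_dec _ _)); lra).
    assert (Hhi : hi <= M - 1) by (unfold hi, Rmin; repeat (destruct (Rle_dec _ _)); lra).
    destruct (ind_int (setC M q n) _ (-1) lo hi (M + 1) ltac:(lra) ltac:(lra) (setC_iff M q n) Cf) as [E1 [R1 Z1]].
    destruct (ind_int (setC M q n) _ (-1) lo hi (M + 1) ltac:(lra) ltac:(lra) (setC_iff M q n) Cg2) as [E2 [R2 Z2]].
    exists (ex_RInt_Reals_0 _ _ _ E1), (ex_RInt_Reals_0 _ _ _ E2).
    rewrite <- !RInt_Reals. apply Rle_ge.
    destruct (Rle_dec lo hi) as [Hlh|Hlh].
    + rewrite (R1 Hlh), (R2 Hlh).
      apply (GB _ _ _ lo hi Hlh Cf Cg2 Ck).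
      * intros s. apply idC; auto.
      * intros s Hs1 Hs2. cbv beta. replace (lo + hi - s) with (n - s) by lra.
        assert (Hm : setC M q n s) by (apply setC_iff; auto). destruct Hm as [_ [Hm1 Hm2]].
        apply posC; auto; lra.
    + rewrite (Z1 ltac:(lra)), (Z2 ltac:(lra)). lra.
Qed.
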